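(* The largest supercommutative quotient of $OSym$ is $R:=OSym/\langle o^2,[o,e_2]\rangle$ (with $o:=e_1$, $[a,b]=ab-ba$). Writing $\dot a$ for the image of $a\in OSym$ in $R$, one has $\dot e_{2r+1}=\dot e_{2r}\dot o$ and $\dot h_{2r+1}=\dot h_{2r}\dot o$ for all $r\ge0$, and there is an isomorphism of graded superalgebras $R\xrightarrow{\sim}Sym[c]$ sending $\dot o\mapsto c$, $(-1)^r\dot e_{2r}$ to the $r$-th elementary symmetric function, and $\dot h_{2r}$ to the $r$-th complete symmetric function.
   Context: $\Bbbk$ is an algebraically closed field of characteristic $\neq2$. $OSym$ is the graded superalgebra generated by $h_r$ ($r\ge1$) of degree $2r$ and parity $r\bmod2$ subject to (with $h_0:=1$, $r\ge0,s\ge1$): $h_rh_s=h_sh_r$ if $r\equiv s\pmod2$; $h_rh_s+(-1)^rh_sh_r=(-1)^rh_{r+1}h_{s-1}+h_{s-1}h_{r+1}$ if $r\not\equiv s\pmod2$. Define $e_r$ by $\sum_{s=0}^r(-1)^se_sh_{r-s}=\delta_{r,0}$. A graded superalgebra is supercommutative if $ab=(-1)^{\mathrm{par}(a)\mathrm{par}(b)}ba$ for homogeneous $a,b$. $Sym$ is the (ordinary) algebra of symmetric functions over $\Bbbk$, viewed as purely even with the $r$-th elementary and complete symmetric functions in degree $4r$; $Sym[c]$ is the supercommutative graded superalgebra obtained by adjoining an odd element $c$ of degree $2$ with $c^2=0$. *)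

(* Defs.v *)
From HB Require Import structures.
From mathcomp Require Import all_boot all_order all_algebra.
Set Implicit Arguments. Unset Strict Implicit. Unset Printing Implicit Defensive.
Import Order.TTheory GRing.Theory Num.Theory.
Local Open Scope ring_scope.

Section Defs.
Variable K : fieldType.

(* The defining relations of OSym, for a family g (g r = image of h_r). *)
Definition OSym_rel (B : algType K) (g : nat -> B) : Prop :=
  g 0%N = 1 /\
  forall r s : nat, (0 < s)%N ->
    if odd r == odd s then g r * g s = g s * g r
    else g r * g s + (-1) ^+ r * (g s * g r)
         = (-1) ^+ r * (g r.+1 * g s.-1) + g s.-1 * g r.+1.

Definition is_OSym (A : algType K) (h : nat -> A) : Prop :=
  OSym_rel h /\
  forall (B : algType K) (g : nat -> B), OSym_rel g ->
    exists f : {lrmorphism A -> B}, (forall r, f (h r) = g r) /\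
      forall f' : {lrmorphism A -> B}, (forall r, f' (h r) = g r) -> f' =1 f.

Definition OSym_deg (A : algType K) (h : nat -> A) (d : nat) (a : A) : Prop :=
  exists s : seq (K * seq nat),
    (forall x, x \in s -> (2 * sumn x.2)%N = d) /\
    a = \sum_(x <- s) x.1 *: \prod_(r <- x.2) h r.

Definition OSym_par (A : algType K) (h : nat -> A) (p : bool) (a : A) : Prop :=
  exists s : seq (K * seq nat),
    (forall x, x \in s -> odd (sumn x.2) = p) /\
    a = \sum_(x <- s) x.1 *: \prod_(r <- x.2) h r.

Definition scomm (A : algType K) (h : nat -> A) (x : A) : Prop :=
  exists (a b : A) (pa pb : bool), OSym_par h pa a /\ OSym_par h pb b /\
    x = a * b - (-1) ^+ (pa && pb) * (b * a).

Definition ideal_gen (A : algType K) (P : A -> Prop) (x : A) : Prop :=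
  exists s : seq (A * A * A),
    (forall t, t \in s -> P t.1.2) /\
    x = \sum_(t <- s) t.1.1 * t.1.2 * t.2.

(* (S, e) is the algebra of symmetric functions, e r being the r-th
   elementary symmetric function (e 0 = 1): the free commutative algebra
   on the e r, r >= 1. *)
Definition is_Sym (S : comAlgType K) (e : nat -> S) : Prop :=
  e 0%N = 1 /\
  forall (B : comAlgType K) (b : nat -> B), b 0%N = 1 ->
    exists f : {lrmorphism S -> B}, (forall r, f (e r) = b r) /\
      forall f' : {lrmorphism S -> B}, (forall r, f' (e r) = b r) -> f' =1 f.

Definition Sym_deg (S : comAlgType K) (e : nat -> S) (d : nat) (x : S) : Prop :=
  exists s : seq (K * seq nat),
    (forall y, y \in s -> (4 * sumn y.2)%N = d) /\
    x = \sum_(y <- s) y.1 *: \prod_(r <- y.2) e r.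

(* (T, iota, c) is Sym[c]: Sym with an (odd) element c adjoined, c^2 = 0.
   As Sym is purely even, Sym[c] is commutative; universal property. *)
Definition is_adjoin_c (S T : comAlgType K) (iota : {lrmorphism S -> T}) (c : T)
  : Prop :=
  c * c = 0 /\
  forall (B : comAlgType K) (f : {lrmorphism S -> B}) (d : B), d * d = 0 ->
    exists g : {lrmorphism T -> B},
      ((forall x, g (iota x) = f x) /\ g c = d) /\
      forall g' : {lrmorphism T -> B},
        (forall x, g' (iota x) = f x) -> g' c = d -> g' =1 g.

Definition SymC_deg (S T : comAlgType K) (e : nat -> S) (iota : {lrmorphism S -> T})
  (c : T) (d : nat) (t : T) : Prop :=
  exists s0 s1 : S, Sym_deg e d s0 /\ ((2 <= d)%N -> Sym_deg e (d - 2) s1) /\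
    ((d < 2)%N -> s1 = 0) /\ t = iota s0 + iota s1 * c.

Definition SymC_par (S T : comAlgType K) (iota : {lrmorphism S -> T}) (c : T)
  (p : bool) (t : T) : Prop :=
  exists s : S, t = if p then iota s * c else iota s.

End Defs.

(* Main.v *)
Require Import Defs.
From HB Require Import structures.
From mathcomp Require Import all_boot all_order all_algebra.
From mathcomp Require Import zify.
From Stdlib Require Import ClassicalEpsilon.
Import GRing.Theory.
Local Open Scope ring_scope.

Set Implicit Arguments. Unset Strict Implicit. Unset Printing Implicit Defensive.

Section IdealGen.
Variables (K : fieldType) (A : algType K) (P : A -> Prop).
Local Notation I := (ideal_gen P).

Lemma idg0 : I 0.
Proof. by exists [::]; split=> //; rewrite big_nil. Qed.

Lemma idgD x y : I x -> I y -> I (x + y).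
Proof.
move=> [s1 [H1 ->]] [s2 [H2 ->]]; exists (s1 ++ s2); split; last by rewrite big_cat.
by move=> t; rewrite mem_cat => /orP[/H1|/H2].
Qed.

Lemma idgMl a x : I x -> I (a * x).
Proof.
move=> [s [H ->]]; exists [seq (a * t.1.1, t.1.2, t.2) | t <- s]; split.
  by move=> t /mapP[u /H Hu ->].
by rewrite big_map mulr_sumr; apply: eq_bigr => t _; rewrite !mulrA.
Qed.

Lemma idgMr x b : I x -> I (x * b).
Proof.
move=> [s [H ->]]; exists [seq (t.1.1, t.1.2, t.2 * b) | t <- s]; split.
  by move=> t /mapP[u /H Hu ->].
by rewrite big_map mulr_suml; apply: eq_bigr => t _; rewrite !mulrA.
Qed.

Lemma idgZ k x : I x -> I (k *: x).
Proof. by move=> Hx; rewrite -mulr_algl; apply: idgMl. Qed.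

Lemma idgN x : I x -> I (- x).
Proof. by move=> Hx; rewrite -scaleN1r; apply: idgZ. Qed.

Lemma idgB x y : I x -> I y -> I (x - y).
Proof. by move=> Hx Hy; apply: idgD => //; apply: idgN. Qed.

Lemma idgP x : P x -> I x.
Proof.
move=> Hx; exists [:: (1, x, 1)]; split; first by move=> t; rewrite inE => /eqP ->.
by rewrite big_seq1 mulr1 mul1r.
Qed.

Lemma idg_sum (T : eqType) (s : seq T) (F : T -> A) :
  (forall t, t \in s -> I (F t)) -> I (\sum_(t <- s) F t).
Proof.
elim: s => [|a s IH] H; first by rewrite big_nil; apply: idg0.
rewrite big_cons; apply: idgD; first by apply: H; rewrite inE eqxx.
by apply: IH => t Ht; apply: H; rewrite inE Ht orbT.
Qed.

End IdealGen.

Lemma idg_sub (K : fieldType) (A : algType K) (P Q : A -> Prop) x : (forall y, P y -> ideal_gen Q y) -> ideal_gen P x -> ideal_gen Q x.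
Proof.
move=> HPQ [s [H ->]]; apply: idg_sum => t /H Ht.
by apply: idgMr; apply: idgMl; apply: HPQ.
Qed.


Local Open Scope quotient_scope.

Definition pb (P : Prop) : bool := if excluded_middle_informative P then true else false.
Lemma pbP (P : Prop) : reflect P (pb P).
Proof. by rewrite /pb; case: excluded_middle_informative => H; constructor. Qed.

Section Quot.
Variables (K : fieldType) (A : algType K) (P : A -> Prop).
Hypothesis P1 : ~ ideal_gen P 1.
Local Notation I := (ideal_gen P).

Definition qeq (x y : A) := pb (I (x - y)).

Lemma qeqE x y : qeq x y = pb (I (x - y)). Proof. by []. Qed.

Lemma qeq_is_equiv : equiv_class_of qeq.
Proof.
split=> [x|x y|y x z]; rewrite !qeqE.
- by apply/pbP; rewrite subrr; apply: idg0.
- by apply/pbP/pbP => H; rewrite -opprB; apply: idgN.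
- move=> /pbP H1 /pbP H2; apply/pbP.
  by have := idgD H1 H2; rewrite addrA subrK.
Qed.

Canonical qeq_equiv := EquivRelPack qeq_is_equiv.
Canonical qeq_encModRel := defaultEncModRel qeq.

Definition Qt (H : ~ ideal_gen P 1) : Type := {eq_quot qeq}.
Definition Q := Qt P1.
HB.instance Definition _ : EqQuotient A qeq Q := EqQuotient.on Q.
HB.instance Definition _ := Choice.on Q.

Lemma qE x y : (x = y %[mod Q]) <-> I (x - y).
Proof. by split => [/eqquotP /pbP|H]; [|apply/eqquotP/pbP]. Qed.

Definition zero : Q := lift_cst Q 0.
Definition add := lift_op2 Q +%R.
Definition opp := lift_op1 Q -%R.
Definition one : Q := lift_cst Q 1.
Definition mul := lift_op2 Q *%R.
Definition scl (k : K) := lift_op1 Q ( *:%R k).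

Canonical pi_zero_morph := PiConst zero.
Canonical pi_one_morph := PiConst one.

Lemma reprE (x : A) : I (repr (\pi_Q x) - x).
Proof. by apply/qE; rewrite reprK. Qed.

Lemma pi_opp : {morph \pi_Q : x / - x >-> opp x}.
Proof.
move=> x; unlock opp; apply/qE.
by rewrite opprK addrC; apply: reprE.
Qed.
Canonical pi_opp_morph := PiMorph1 pi_opp.

Lemma pi_add : {morph \pi_Q : x y / x + y >-> add x y}.
Proof.
move=> x y /=; unlock add; apply/qE.
have := idgN (idgD (reprE x) (reprE y)).
set rx := repr _; set ry := repr _.
suff -> : x + y - (rx + ry) = - (rx - x + (ry - y)) by [].
by rewrite [RHS]opprD !opprB addrACA opprD.
Qed.
Canonical pi_add_morph := PiMorph2 pi_add.

Lemma pi_mul : {morph \pi_Q : x y / x * y >-> mul x y}.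
Proof.
move=> x y /=; unlock mul; apply/qE.
set x' := repr _; set y' := repr _.
have -> : x * y - x' * y' = - ((x' - x) * y' + x * (y' - y)).
  by rewrite mulrBl mulrBr addrA subrK opprB.
by apply: idgN; apply: idgD; [apply: idgMr | apply: idgMl]; apply: reprE.
Qed.
Canonical pi_mul_morph := PiMorph2 pi_mul.

Lemma pi_scl k : {morph \pi_Q : x / k *: x >-> scl k x}.
Proof.
move=> x /=; unlock scl; apply/qE.
by rewrite -scalerBr -opprB scalerN; apply: idgN; apply: idgZ; apply: reprE.
Qed.
Canonical pi_scl_morph k := PiMorph1 (pi_scl k).

Lemma addqA: associative add.
Proof. by move=> x y z; rewrite -[x]reprK -[y]reprK -[z]reprK !piE addrA. Qed.
Lemma addqC: commutative add.
Proof. by move=> x y; rewrite -[x]reprK -[y]reprK !piE addrC. Qed.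
Lemma add0q: left_id zero add.
Proof. by move=> x; rewrite -[x]reprK !piE add0r. Qed.
Lemma addNq: left_inverse zero opp add.
Proof. by move=> x; rewrite -[x]reprK !piE addNr. Qed.

HB.instance Definition _ := GRing.isZmodule.Build Q addqA addqC add0q addNq.

Lemma mulqA: associative mul.
Proof. by move=> x y z; rewrite -[x]reprK -[y]reprK -[z]reprK !piE mulrA. Qed.
Lemma mul1q: left_id one mul.
Proof. by move=> x; rewrite -[x]reprK !piE mul1r. Qed.
Lemma mulq1: right_id one mul.
Proof. by move=> x; rewrite -[x]reprK !piE mulr1. Qed.
Lemma mulqDl: left_distributive mul +%R.
Proof. by move=> x y z; rewrite -[x]reprK -[y]reprK -[z]reprK /GRing.add /= !piE mulrDl. Qed.
Lemma mulqDr: right_distributive mul +%R.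
Proof. by move=> x y z; rewrite -[x]reprK -[y]reprK -[z]reprK /GRing.add /= !piE mulrDr. Qed.
Lemma oneq_neq0 : one != 0.
Proof. apply/negP => /eqP H; apply: P1; rewrite -(subr0 1); apply/qE. move: H; rewrite /one /GRing.zero /= /zero; unlock. exact. Qed.

HB.instance Definition _ := GRing.Zmodule_isNzRing.Build Q mulqA mul1q mulq1 mulqDl mulqDr oneq_neq0.

Lemma sclA a b v : scl a (scl b v) = scl (a * b) v.
Proof. by rewrite -[v]reprK !piE scalerA. Qed.
Lemma scl1 : left_id 1 scl.
Proof. by move=> v; rewrite -[v]reprK !piE scale1r. Qed.
Lemma sclDr : right_distributive scl +%R.
Proof. by move=> a x y; rewrite -[x]reprK -[y]reprK /GRing.add /= !piE scalerDr. Qed.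
Lemma sclDl v : {morph scl^~ v: a b / a + b}.
Proof. by move=> a b; rewrite -[v]reprK /GRing.add /= !piE scalerDl. Qed.

HB.instance Definition _ := GRing.Zmodule_isLmodule.Build K Q sclA scl1 sclDr sclDl.

Lemma sclAl (a : K) (u v : Q) : a *: (u * v) = (a *: u) * v.
Proof. by rewrite -[u]reprK -[v]reprK /GRing.scale /GRing.mul /= !piE scalerAl. Qed.
HB.instance Definition _ := GRing.Lmodule_isLalgebra.Build K Q sclAl.
Lemma sclAr (a : K) (u v : Q) : a *: (u * v) = u * (a *: v).
Proof. by rewrite -[u]reprK -[v]reprK /GRing.scale /GRing.mul /= !piE scalerAr. Qed.
HB.instance Definition _ := GRing.Lalgebra_isAlgebra.Build K Q sclAr.

Definition piQ (x : A) : Q := \pi_Q x.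

Lemma piQ_add : zmod_morphism piQ.
Proof. by move=> x y; rewrite /piQ !piE. Qed.
Lemma piQ_mul : monoid_morphism piQ.
Proof. by split=> [|x y]; rewrite /piQ !piE. Qed.
Lemma piQ_scl : scalable piQ.
Proof. by move=> k x; apply: pi_scl. Qed.
HB.instance Definition _ := GRing.isZmodMorphism.Build A Q piQ piQ_add.
HB.instance Definition _ := GRing.isMonoidMorphism.Build A Q piQ piQ_mul.
HB.instance Definition _ := GRing.isScalable.Build K A Q *:%R piQ piQ_scl.

Definition piQlr : {lrmorphism A -> Q} := piQ.

Lemma piQ0 x : piQ x = 0 <-> I x.
Proof.
have -> : (0 : Q) = piQ 0 by rewrite raddf0.
by split=> [/qE|H]; [rewrite subr0 | apply/qE; rewrite subr0].
Qed.

Lemma piQ_surj (q : Q) : piQ (repr q) = q.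
Proof. exact: reprK. Qed.

End Quot.

Local Close Scope quotient_scope.

Lemma OSym_rel_morph (K : fieldType) (B C : algType K) (f : {rmorphism B -> C}) (g : nat -> B) :
  OSym_rel g -> OSym_rel (f \o g).
Proof.
move=> [H0 H]; split=> [|r s Hs] /=; first by rewrite H0 rmorph1.
have := H r s Hs; case: ifP => _ E.
  by rewrite -!rmorphM E.
by rewrite -!rmorphM -(rmorph_sign f) -!rmorphM -!rmorphD E.
Qed.

Lemma OSym_rel_inj (K : fieldType) (B C : algType K) (f : {rmorphism B -> C}) (g : nat -> B) :
  injective f -> OSym_rel (f \o g) -> OSym_rel g.
Proof.
move=> fI [H0 H]; split=> [|r s Hs] /=; first by apply: fI; rewrite rmorph1.
have := H r s Hs; case: ifP => _ /= E; apply: fI.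
  by rewrite !rmorphM E.
by rewrite !(rmorphD, rmorphM) (rmorph_sign f) E.
Qed.

Section Gen.
Variables (K : fieldType) (A : algType K) (h : nat -> A) (HA : is_OSym h).

Definition W (w : seq nat) : A := \prod_(r <- w) h r.
Definition lc (s : seq (K * seq nat)) : A := \sum_(y <- s) y.1 *: W y.2.
Definition span_w (x : A) := exists s, x = lc s.

Lemma lc_cat s1 s2 : lc (s1 ++ s2) = lc s1 + lc s2.
Proof. by rewrite /lc big_cat. Qed.

Lemma lc_scale k s : lc [seq (k * y.1, y.2) | y <- s] = k *: lc s.
Proof. by rewrite /lc big_map scaler_sumr; apply: eq_bigr => y _; rewrite scalerA. Qed.

Lemma lc_mul s1 s2 :
  lc [seq (x.1 * y.1, x.2 ++ y.2) | x <- s1, y <- s2] = lc s1 * lc s2.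
Proof.
rewrite /lc big_allpairs_dep /= mulr_suml; apply: eq_bigr => x _.
rewrite mulr_sumr; apply: eq_bigr => y _.
by rewrite /W big_cat /= -scalerAl -scalerAr scalerA.
Qed.

Definition Sp : {pred A} := fun x => pb (span_w x).

Lemma Sp_closed : GRing.subalg_closed Sp.
Proof.
split.
- apply/pbP; exists [:: (1, [::])]; by rewrite /lc big_seq1 /W big_nil scale1r.
- move=> k u v /pbP[s1 ->] /pbP[s2 ->]; apply/pbP.
  by exists ([seq (k * y.1, y.2) | y <- s1] ++ s2); rewrite lc_cat lc_scale.
- move=> u v /pbP[s1 ->] /pbP[s2 ->]; apply/pbP.
  by eexists; rewrite -lc_mul.
Qed.

HB.instance Definition _ := GRing.isSubalgClosed.Build K A Sp Sp_closed.

Record Wt := WTt { wval :> A; wvalP : wval \in Sp }.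
HB.instance Definition _ := [isSub for wval].
HB.instance Definition _ := [Choice of Wt by <:].
HB.instance Definition _ := [SubChoice_isSubAlgebra of Wt by <:].

Lemma h_in r : h r \in Sp.
Proof.
apply/pbP; exists [:: (1, [:: r])]; by rewrite /lc big_seq1 /W big_seq1 scale1r.
Qed.

Definition gW r : Wt := WTt (h_in r).

Definition wv : Wt -> A := val.
HB.instance Definition _ := GRing.RMorphism.on wv.
HB.instance Definition _ := GRing.Linear.on wv.

Lemma span_all x : span_w x.
Proof.
have Hg : OSym_rel gW.
  apply: (@OSym_rel_inj _ _ _ wv); first exact: val_inj.
  exact: HA.1.
have [fW [HfW _]] := HA.2 _ _ Hg.
have [f0 [_ U]] := HA.2 _ _ HA.1.
have E1 : (wv \o fW : A -> A) =1 f0.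
  by apply: U => r /=; rewrite HfW.
have E2 : (idfun : A -> A) =1 f0 by apply: U.
have := wvalP (fW x); rewrite -[wval _]/((wv \o fW) x) E1 -(E2 x) /=.
by move/pbP.
Qed.

End Gen.

Section Rel.
Variables (K : fieldType) (B : algType K) (g : nat -> B) (Hg : OSym_rel g).

Lemma rel_same r s : (0 < s)%N -> odd r = odd s -> g r * g s = g s * g r.
Proof. by move=> Hs E; have := Hg.2 r s Hs; rewrite E eqxx. Qed.

Lemma rel_eo r : ~~ odd r -> g r * g 1 + g 1 * g r = g r.+1 + g r.+1.
Proof.
move=> Hr; have := Hg.2 r 1 isT; rewrite (negPf Hr) /= -signr_odd (negPf Hr) expr0 !mul1r.
by rewrite Hg.1 mulr1 mul1r.
Qed.

Lemma rel_oe r s : odd r -> ~~ odd s -> (0 < s)%N ->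
  g r * g s - g s * g r = g s.-1 * g r.+1 - g r.+1 * g s.-1.
Proof.
move=> Hr Hs s0; have := Hg.2 r s s0; rewrite Hr (negPf Hs) /= -signr_odd Hr expr1 !mulN1r.
by move=> ->; rewrite addrC.
Qed.

Variable (two_ne0 : (2%:R : K) != 0).
Hypothesis (Hoo : g 1 * g 1 = 0) (Ho2 : g 1 * g 2 = g 2 * g 1).

Lemma comm_o k : g 1 * g k.*2 = g k.*2 * g 1 /\ g k.*2.+1 = g k.*2 * g 1.
Proof.
have DofC j : g 1 * g j.*2 = g j.*2 * g 1 -> g j.*2.+1 = g j.*2 * g 1.
  move=> C; have := rel_eo (r := j.*2) (introT negPf (odd_double j)).
  rewrite -C -[_ + _]mulr2n -[g _ + g _]mulr2n -!scaler_nat => /(congr1 (fun x => (2%:R : K)^-1 *: x)).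
  by rewrite !scalerA mulVf // !scale1r => <-.
suff C : g 1 * g k.*2 = g k.*2 * g 1 by split => //; apply: DofC.
elim: k => [|k IH]; first by rewrite Hg.1 mulr1 mul1r.
case: k IH => [|k] IH; first by [].
apply/eqP; rewrite -subr_eq0.
have := rel_oe (r := 1) (s := k.+2.*2) isT (introT negPf (odd_double _)) isT => ->.
rewrite /= -[(k.+1.*2).+1]/(k.+1.*2.+1) (DofC _ IH) -mulrA Ho2 mulrA.
by rewrite mulrA (rel_same (r := 2) (s := k.+1.*2)) ?odd_double ?subrr.
Qed.

Lemma g_nf r : g r = g (r./2).*2 * g 1 ^+ odd r.
Proof.
rewrite -{1}(odd_double_half r); case: (odd r); last by rewrite expr0 mulr1.
by rewrite expr1 add1n (comm_o _).2.
Qed.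

Lemma gen_comm r s : GRing.comm (g r) (g s).
Proof.
have Ce a b : GRing.comm (g a.*2) (g b.*2).
  case: b => [|b]; first by rewrite Hg.1; apply: commr1.
  by apply: rel_same => //; rewrite !odd_double.
have Co a : GRing.comm (g 1) (g a.*2) by exact: (comm_o a).1.
rewrite (g_nf r) (g_nf s); apply: commrM; apply: commr_sym; apply: commrM.
- exact: Ce.
- by apply: commrX; apply: commr_sym; apply: Co.
- by apply: commr_sym; apply: commrX; apply: commr_sym; apply: Co.
- by apply: commrX; apply: commr_sym; apply: commrX; apply: commr_refl.
Qed.

End Rel.

Section Sums.
Variable (R : nmodType).

Lemma sum_split_even m (f : nat -> R) :
  \sum_(s < (2 * m).+1) f s = \sum_(j < m.+1) f (2 * j)%N + \sum_(j < m) f (2 * j).+1.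
Proof.
elim: m => [|m IH]; first by rewrite !big_ord_recr !big_ord0 /= !add0r addr0.
have -> : (2 * m.+1).+1 = ((2 * m).+1).+2 by lia.
rewrite (big_ord_recr (2 * m).+2) (big_ord_recr (2 * m).+1) /= IH.
rewrite (big_ord_recr m.+1 (fun j => f (2 * j)%N)) (big_ord_recr m (fun j => f (2 * j).+1)) /=.
have -> : (2 * m.+1)%N = (2 * m).+2 by lia.
rewrite -!addrA; congr (_ + _); by rewrite addrA addrC.
Qed.

Lemma sum_split_odd m (f : nat -> R) :
  \sum_(s < (2 * m).+2) f s = \sum_(j < m.+1) f (2 * j)%N + \sum_(j < m.+1) f (2 * j).+1.
Proof.
by rewrite big_ord_recr /= sum_split_even (big_ord_recr m (fun j => f (2 * j).+1)) /= addrA.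
Qed.

End Sums.

Section Uniq.
Variable (R : pzRingType).

Lemma conv_uniq_l (a a' b : nat -> R) : b 0%N = 1 ->
  (forall m, \sum_(j < m.+1) a j * b (m - j)%N = \sum_(j < m.+1) a' j * b (m - j)%N) ->
  forall m, a m = a' m.
Proof.
move=> b0 H m; elim: m {-2}m (leqnn m) => [|n IH] m Hm.
  by move: Hm; rewrite leqn0 => /eqP ->; have := H 0%N; rewrite !big_ord_recr !big_ord0 /= !add0r b0 !mulr1.
have := H m; rewrite !big_ord_recr /= subnn b0 !mulr1.
rewrite (eq_bigr (fun j : 'I_m => a' j * b (m - j)%N)); last first.
  by move=> j _; rewrite IH //; have := ltn_ord j; lia.
by move/addrI.
Qed.

Lemma conv_uniq_r (a b b' : nat -> R) : a 0%N = 1 ->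
  (forall m, \sum_(j < m.+1) a j * b (m - j)%N = \sum_(j < m.+1) a j * b' (m - j)%N) ->
  forall m, b m = b' m.
Proof.
move=> a0 H m; elim: m {-2}m (leqnn m) => [|n IH] m Hm.
  by move: Hm; rewrite leqn0 => /eqP ->; have := H 0%N; rewrite !big_ord_recr !big_ord0 /= !add0r a0 !mul1r.
have := H m; rewrite !big_ord_recl /= subn0 a0 !mul1r.
case: m Hm => [|m] Hm.
  by rewrite !big_ord0 !addr0.
rewrite (eq_bigr (fun j : 'I_m.+1 => a (bump 0 j) * b' (m.+1 - bump 0 j)%N)); last first.
  by move=> j _; rewrite IH //; have := ltn_ord j; rewrite /bump /=; lia.
by move/addIr.
Qed.

End Uniq.

Section Parity.
Variables (R : comPzRingType) (d : R) (Hd : d * d = 0) (H : nat -> R) (H0 : H 0%N = 1).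
Variables (G x : nat -> R).
Hypothesis GE : forall k, G (2 * k)%N = H k.
Hypothesis GO : forall k, G (2 * k).+1 = H k * d.
Hypothesis Hx : forall n, \sum_(s < n.+1) (-1) ^+ s * (x s * G (n - s)%N) = (n == 0%N)%:R.

Lemma par_odd m : x (2 * m).+1 = x (2 * m)%N * d.
Proof.
elim: m {-2}m (leqnn m) => [|n IH] m Hm.
  move: Hm; rewrite leqn0 => /eqP ->.
  have := Hx 1; rewrite !big_ord_recr big_ord0 /= add0r expr0 expr1 mul1r.
  have -> : G 1%N = H 0%N * d by rewrite -GO.
  have -> : G 0%N = H 0%N by rewrite -GE.
  rewrite H0 mul1r mulr1 mulN1r => /eqP; rewrite subr_eq0 => /eqP <-; by [].
have := Hx (2 * m).+1; rewrite (sum_split_odd m (fun s => (-1) ^+ s * (x s * G ((2 * m).+1 - s)%N))) /= big_ord_recr /= [X in _ + X = _]big_ord_recr /=.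
rewrite (eq_bigr (fun j : 'I_m => x (2 * j)%N * (H (m - j)%N * d))); last first.
  move=> j _; have Hj := ltn_ord j.
  rewrite -signr_odd oddM /= expr0 mul1r.
  have -> : ((2 * m).+1 - 2 * j)%N = (2 * (m - j)).+1 by lia.
  by rewrite GO.
rewrite [X in _ + _ + (X + _) = _](eq_bigr (fun j : 'I_m => - (x (2 * j)%N * (H (m - j)%N * d)))); last first.
  move=> j _; have Hj := ltn_ord j.
  rewrite -signr_odd /= oddM /= expr1 mulN1r IH; last by lia.
  have -> : ((2 * m).+1 - (2 * j).+1)%N = (2 * (m - j))%N by lia.
  by rewrite GE -mulrA [d * _]mulrC.
rewrite sumrN -signr_odd oddM /= expr0 mul1r -signr_odd /= oddM /= expr1 mulN1r.
have -> : ((2 * m).+1 - 2 * m)%N = (2 * 0).+1 by lia.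
have -> : ((2 * m).+1 - (2 * m).+1)%N = (2 * 0)%N by lia.
rewrite GO GE H0 mul1r mulr1 addrACA subrr add0r => /eqP; rewrite subr_eq0 => /eqP.
by move=> ->.
Qed.

Lemma par_even m : \sum_(j < m.+1) x (2 * j)%N * H (m - j)%N = (m == 0%N)%:R.
Proof.
have := Hx (2 * m); rewrite (sum_split_even m (fun s => (-1) ^+ s * (x s * G (2 * m - s)%N))).
rewrite [X in X + _](eq_bigr (fun j : 'I_m.+1 => x (2 * j)%N * H (m - j)%N)); last first.
  move=> j _; have Hj := ltn_ord j.
  rewrite -signr_odd oddM /= expr0 mul1r.
  have -> : (2 * m - 2 * j)%N = (2 * (m - j))%N by lia.
  by rewrite GE.
rewrite [X in _ + X](eq_bigr (fun j : 'I_m => 0)); last first.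
  move=> j _; have Hj := ltn_ord j.
  rewrite par_odd.
  have -> : (2 * m - (2 * j).+1)%N = (2 * (m - j - 1)).+1 by lia.
  by rewrite GO [H _ * d]mulrC !mulrA -[_ * d * d]mulrA Hd mulr0 mul0r.
rewrite big1_eq addr0 => ->.
by congr (_%:R); apply/eqP/eqP; lia.
Qed.

End Parity.

Section SymDeg.
Variables (K : fieldType) (S : comAlgType K) (e : nat -> S).

Lemma SD0 d : Sym_deg e d 0.
Proof. by exists [::]; split=> //; rewrite big_nil. Qed.

Lemma SDD d x y : Sym_deg e d x -> Sym_deg e d y -> Sym_deg e d (x + y).
Proof.
move=> [s1 [H1 ->]] [s2 [H2 ->]]; exists (s1 ++ s2); split; last by rewrite big_cat.
by move=> t; rewrite mem_cat => /orP[/H1|/H2].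
Qed.

Lemma SDZ d k x : Sym_deg e d x -> Sym_deg e d (k *: x).
Proof.
move=> [s [H ->]]; exists [seq (k * y.1, y.2) | y <- s]; split.
  by move=> t /mapP[u /H Hu ->].
by rewrite big_map scaler_sumr; apply: eq_bigr => y _; rewrite scalerA.
Qed.

Lemma SDN d x : Sym_deg e d x -> Sym_deg e d (- x).
Proof. by move=> H; rewrite -scaleN1r; apply: SDZ. Qed.

Lemma SDsign d n x : Sym_deg e d x -> Sym_deg e d ((-1) ^+ n * x).
Proof.
move=> H; rewrite -signr_odd; case: (odd n); rewrite ?expr0 ?expr1 ?mul1r ?mulN1r //.
exact: SDN.
Qed.

Lemma SDM d1 d2 x y : Sym_deg e d1 x -> Sym_deg e d2 y -> Sym_deg e (d1 + d2) (x * y).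
Proof.
move=> [s1 [H1 ->]] [s2 [H2 ->]].
exists [seq (a.1 * b.1, a.2 ++ b.2) | a <- s1, b <- s2]; split.
  move=> t /allpairsP[[a b] [/= Ha Hb ->]] /=.
  by rewrite sumn_cat mulnDr (H1 _ Ha) (H2 _ Hb).
rewrite big_allpairs_dep /= mulr_suml; apply: eq_bigr => a _.
rewrite mulr_sumr; apply: eq_bigr => b _.
by rewrite big_cat /= -scalerAl -scalerAr scalerA.
Qed.

Lemma SD1 : Sym_deg e 0 1.
Proof. by exists [:: (1, [::])]; split; [move=> t; rewrite inE => /eqP -> | rewrite big_seq1 big_nil scale1r]. Qed.

Lemma SDe r : Sym_deg e (4 * r) (e r).
Proof.
exists [:: (1, [:: r])]; split; first by move=> t; rewrite inE => /eqP -> /=; rewrite addn0.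
by rewrite big_seq1 big_seq1 scale1r.
Qed.

Lemma SD_sum_seq (T : eqType) d (s : seq T) (P : pred T) (F : T -> S) :
  (forall y, y \in s -> P y -> Sym_deg e d (F y)) -> Sym_deg e d (\sum_(y <- s | P y) F y).
Proof.
elim: s => [|a s IH] H; first by rewrite big_nil; apply: SD0.
rewrite big_cons; case: ifP => Pa.
  apply: SDD; first by apply: H => //; rewrite inE eqxx.
  by apply: IH => y Hy; apply: H; rewrite inE Hy orbT.
by apply: IH => y Hy; apply: H; rewrite inE Hy orbT.
Qed.

Lemma SD_sum_ord d n (F : 'I_n -> S) :
  (forall i, Sym_deg e d (F i)) -> Sym_deg e d (\sum_(i < n) F i).
Proof. by move=> H; apply: big_ind => //; [apply: SD0 | apply: SDD]. Qed.

Lemma SD_eq d d' x : d = d' -> Sym_deg e d x -> Sym_deg e d' x.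
Proof. by move=> ->. Qed.

Variable (hS : nat -> S).
Hypothesis (e0 : e 0%N = 1).
Hypothesis HhS : forall r : nat,
     \sum_(s < r.+1) (-1) ^+ s * (e s * hS (r - s)%N) = (r == 0%N)%:R.

Lemma hS0 : hS 0%N = 1.
Proof. by have := HhS 0; rewrite big_ord_recr big_ord0 /= add0r expr0 mul1r e0 mul1r. Qed.

Lemma hS_deg k : Sym_deg e (4 * k) (hS k).
Proof.
elim: k {-2}k (leqnn k) => [|n IH] k Hk.
  by move: Hk; rewrite leqn0 => /eqP ->; rewrite hS0; apply: SD1.
case: k Hk => [|k] Hk; first by rewrite hS0; apply: SD1.
have := HhS k.+1; rewrite big_ord_recl /= expr0 mul1r e0 mul1r subn0 => /eqP.
rewrite addr_eq0 => /eqP ->; apply: SDN.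
apply: SD_sum_ord => i; apply: SDsign.
apply: (@SD_eq (4 * bump 0 i + 4 * (k.+1 - bump 0 i))); first by have := ltn_ord i; rewrite /bump /=; lia.
apply: SDM; first exact: SDe.
by apply: IH; have := ltn_ord i; rewrite /bump /=; lia.
Qed.

Lemma hS_prod_deg (w : seq nat) :
  Sym_deg e (4 * sumn [seq r./2 | r <- w]) (\prod_(r <- w) hS r./2).
Proof.
elim: w => [|r w IH]; first by rewrite big_nil; apply: SD1.
by rewrite big_cons /= mulnDr; apply: SDM => //; apply: hS_deg.
Qed.

End SymDeg.

Lemma half2 k : ((2 * k)./2 = k)%N.
Proof. by rewrite mul2n doubleK. Qed.
Lemma half2S k : (((2 * k).+1)./2 = k)%N.
Proof. by rewrite -uphalfE uphalf_half mul2n odd_double doubleK. Qed.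

Lemma idg_kill (K : fieldType) (A B : algType K) (f : {lrmorphism A -> B}) (P : A -> Prop) x :
  (forall y, P y -> f y = 0) -> ideal_gen P x -> f x = 0.
Proof.
move=> HP [s [Hs ->]]; rewrite rmorph_sum big1_seq // => t /Hs /HP Ht.
have Ht2 : (f : {rmorphism A -> B}) t.1.2 = 0 := Ht.
by rewrite !rmorphM Ht2 mulr0 mul0r.
Qed.

Lemma zmod_id1 (V : zmodType) (a b c : V) : a - b = (- b + c) - (- a + c).
Proof. by rewrite opprD opprK addrACA subrr addr0 addrC. Qed.

Lemma commrZ' (K : fieldType) (B : algType K) (x y : B) (k : K) :
  GRing.comm x y -> GRing.comm x (k *: y).
Proof. by move=> H; rewrite /GRing.comm -scalerAr -scalerAl H. Qed.

Section Main.
Variables (K : fieldType) (two_ne0 : (2%:R : K) != 0).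
Variables (A : algType K) (h : nat -> A) (HA : is_OSym h) (e : nat -> A).
Hypothesis He : forall r : nat,
     \sum_(s < r.+1) (-1) ^+ s * (e s * h (r - s)%N) = (r == 0%N)%:R.
Variables (S : comAlgType K) (eS : nat -> S) (HS : is_Sym eS) (hS : nat -> S).
Hypothesis HhS : forall r : nat,
     \sum_(s < r.+1) (-1) ^+ s * (eS s * hS (r - s)%N) = (r == 0%N)%:R.
Variables (T : comAlgType K) (iota : {lrmorphism S -> T}) (c : T) (HT : is_adjoin_c iota c).

Definition PJ : A -> Prop := fun y => y = e 1 * e 1 \/ y = e 1 * e 2 - e 2 * e 1.
Definition gT r := iota (hS r./2) * c ^+ odd r.

Lemma h0 : h 0%N = 1. Proof. exact: HA.1.1. Qed.

Lemma e0 : e 0%N = 1.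
Proof. by have := He 0; rewrite big_ord_recr big_ord0 /= add0r expr0 mul1r h0 mulr1. Qed.

Lemma e1 : e 1%N = h 1%N.
Proof.
have := He 1; rewrite !big_ord_recr big_ord0 /= add0r expr0 expr1 !mul1r e0 h0 mul1r mulr1 mulN1r.
by move/eqP; rewrite subr_eq0 => /eqP.
Qed.

Lemma e2 : e 2 = h 1%N * h 1%N - h 2.
Proof.
have := He 2; rewrite !big_ord_recr big_ord0 /= add0r expr0 expr1 !mul1r e0 h0 mul1r mulr1 mulN1r e1.
rewrite -signr_odd /= expr0 mul1r => /eqP; rewrite addrC addr_eq0 => /eqP ->.
by rewrite opprD opprK addrC.
Qed.

Lemma hS0' : hS 0%N = 1. Proof. exact: (hS0 HS.1 HhS). Qed.

Lemma cc : c * c = 0. Proof. exact: HT.1. Qed.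

Lemma cX n : (1 < n)%N -> c ^+ n = 0.
Proof. by case: n => [|[|n]] // _; rewrite !exprS mulrA cc mul0r. Qed.

Lemma gT_rel : OSym_rel gT.
Proof.
split=> [|r s Hs]; first by rewrite /gT /= hS0' rmorph1 mulr1.
case: ifP => Hrs; first exact: mulrC.
case Or: (odd r).
  have Os : odd s = false by move: Hrs; rewrite Or; case: (odd s).
  rewrite -signr_odd Or expr1 !mulN1r [gT s * _]mulrC subrr.
  by rewrite [gT s.-1 * _]mulrC addrC subrr.
have Os : odd s by move: Hrs; rewrite Or; case: (odd s).
rewrite -signr_odd Or expr0 !mul1r [gT s * _]mulrC [gT s.-1 * _]mulrC.
suff -> : gT r * gT s = gT r.+1 * gT s.-1 by [].
rewrite /gT /= Or.
rewrite uphalf_half Or add0n.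
clear Hrs; case: s Hs Os => [|s] // _ /= Os; rewrite uphalf_half (negPf Os) add0n /=.
by rewrite expr0 expr1 !mulr1 -mulrA [c * _]mulrC.
Qed.

Lemma par_h1 : OSym_par h true (h 1%N).
Proof.
exists [:: (1, [:: 1%N])]; split; first by move=> t; rewrite inE => /eqP ->.
by rewrite big_seq1 big_seq1 scale1r.
Qed.

Lemma par_e2 : OSym_par h false (e 2).
Proof.
exists [:: (1, [:: 1%N; 1%N]); (-1, [:: 2%N])]; split.
  by move=> t; rewrite !inE => /orP[] /eqP ->.
by rewrite big_cons big_seq1 /= big_cons big_seq1 big_seq1 scale1r scaleN1r e2.
Qed.

Lemma PJ_I y : PJ y -> ideal_gen (scomm h) y.
Proof.
case=> ->.
  have Hs : scomm h (h 1%N * h 1%N - (-1) ^+ (true && true) * (h 1%N * h 1%N)).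
    by exists (h 1%N), (h 1%N), true, true; split; [exact: par_h1 | split; [exact: par_h1|]].
  have := idgZ ((2%:R : K)^-1) (idgP Hs).
  rewrite /= expr1 mulN1r opprK -mulr2n -scaler_nat scalerA mulVf // scale1r.
  by rewrite e1.
apply: idgP; exists (e 1%N), (e 2), true, false; split; first by rewrite e1; exact: par_h1.
by split; [exact: par_e2 | rewrite /= expr0 mul1r].
Qed.

Section WithPhi.
Variable phi : {lrmorphism A -> T}.
Hypothesis Hphi : forall r, phi (h r) = gT r.

Lemma phi_o : phi (h 1%N) = c.
Proof. by rewrite Hphi /gT /= hS0' rmorph1 mul1r expr1. Qed.

Lemma phi_J x : ideal_gen PJ x -> phi x = 0.
Proof.
apply: idg_kill => y [->|->]; first by rewrite rmorphM /= e1 phi_o cc.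
by rewrite rmorphB !rmorphM [phi (e 1) * _]mulrC subrr.
Qed.

Lemma J1 : ~ ideal_gen PJ 1.
Proof. by move/phi_J; rewrite rmorph1; apply/eqP; apply: oner_neq0. Qed.

Local Notation Qj := (Q J1).
Local Notation pi := (piQlr J1).

Lemma relQ : OSym_rel (pi \o h).
Proof. exact: OSym_rel_morph HA.1. Qed.

Lemma QOO : (pi \o h) 1%N * (pi \o h) 1%N = 0.
Proof.
rewrite /= -rmorphM -e1; apply/piQ0; apply: idgP; by left.
Qed.

Lemma QO2 : (pi \o h) 1%N * (pi \o h) 2 = (pi \o h) 2 * (pi \o h) 1%N.
Proof.
apply/eqP; rewrite -subr_eq0 /= -!rmorphM -rmorphB; apply/eqP/piQ0.
have -> : h 1%N * h 2 - h 2 * h 1%N = - (e 1 * e 2 - e 2 * e 1).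
  rewrite e2 e1 mulrBr mulrBl mulrA opprB.
  rewrite [h 1 * h 1 * h 1 - h 2 * h 1]addrC [h 1 * h 1 * h 1 - h 1 * h 2]addrC; apply: zmod_id1.
by apply: idgN; apply: idgP; right.
Qed.

Lemma Qgen_comm r s : GRing.comm ((pi \o h) r) ((pi \o h) s).
Proof. exact: gen_comm relQ two_ne0 QO2 r s. Qed.

Lemma Qcomm_lc s1 s2 : GRing.comm (pi (lc h s1)) (pi (lc h s2)).
Proof.
rewrite /lc !linear_sum /=; apply: commr_sum => y2 _; apply: commr_sym.
apply: commr_sum => y1 _; rewrite !linearZ /=.
apply: commrZ'; apply: commr_sym; apply: commrZ'.
rewrite /W !rmorph_prod.
apply: commr_prod => i _; apply: commr_sym; apply: commr_prod => j _.
exact: Qgen_comm.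
Qed.

Lemma Qcomm (x y : Qj) : x * y = y * x.
Proof.
rewrite -(piQ_surj x) -(piQ_surj y).
have [s1 ->] := span_all HA (repr x); have [s2 ->] := span_all HA (repr y).
exact: Qcomm_lc.
Qed.

Definition Qc : Type := Qj.
HB.instance Definition _ := GRing.Algebra.on Qc.
HB.instance Definition _ := GRing.PzRing_hasCommutativeMul.Build Qc Qcomm.
HB.instance Definition _ := GRing.Lalgebra_isComAlgebra.Build K Qc.

Definition pic : A -> Qc := piQ J1.
HB.instance Definition _ := GRing.isZmodMorphism.Build A Qc pic (piQ_add J1).
HB.instance Definition _ := GRing.isMonoidMorphism.Build A Qc pic (piQ_mul J1).
HB.instance Definition _ := GRing.isScalable.Build K A Qc *:%R pic (piQ_scl J1).

Lemma pic0 x : pic x = 0 <-> ideal_gen PJ x.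
Proof. exact: piQ0. Qed.

Definition O : Qc := pic (h 1%N).
Definition Hq2 m : Qc := pic (h (2 * m)%N).

Lemma OO : O * O = 0.
Proof. exact: QOO. Qed.

Lemma HqO k : pic (h (2 * k).+1) = Hq2 k * O.
Proof. by rewrite /Hq2 mul2n; exact: (comm_o relQ two_ne0 QO2 k).2. Qed.

Lemma Hq20 : Hq2 0 = 1.
Proof. by rewrite /Hq2 muln0 h0 rmorph1. Qed.

Lemma pic_He n :
  \sum_(s < n.+1) (-1) ^+ s * (pic (e s) * pic (h (n - s)%N)) = (n == 0%N)%:R.
Proof.
have := congr1 pic (He n); rewrite rmorph_sum rmorph_nat => <-.
by apply: eq_bigr => s _; rewrite rmorphM rmorph_sign rmorphM.
Qed.

Lemma pe_odd m : pic (e (2 * m).+1) = pic (e (2 * m)%N) * O.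
Proof. exact: (@par_odd _ _ _ Hq20 (fun r => pic (h r)) (fun s => pic (e s)) (fun k => erefl) HqO pic_He). Qed.

Lemma pe_even m : \sum_(j < m.+1) pic (e (2 * j)%N) * Hq2 (m - j)%N = (m == 0%N)%:R.
Proof. exact: (@par_even _ _ OO _ Hq20 (fun r => pic (h r)) (fun s => pic (e s)) (fun k => erefl) HqO pic_He). Qed.

Lemma gTE k : gT (2 * k)%N = iota (hS k).
Proof. by rewrite /gT half2 oddM /= mulr1. Qed.

Lemma gTO k : gT (2 * k).+1 = iota (hS k) * c.
Proof. by rewrite /gT half2S /= oddM /= expr1. Qed.

Lemma phi_He n :
  \sum_(s < n.+1) (-1) ^+ s * (phi (e s) * gT (n - s)%N) = (n == 0%N)%:R.
Proof.
have := congr1 phi (He n); rewrite rmorph_sum rmorph_nat => <-.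
by apply: eq_bigr => s _; rewrite rmorphM rmorph_sign rmorphM /= Hphi.
Qed.

Lemma iota_HhS m :
  \sum_(j < m.+1) ((-1) ^+ j * iota (eS j)) * iota (hS (m - j)%N) = (m == 0%N)%:R.
Proof.
have := congr1 iota (HhS m); rewrite rmorph_sum rmorph_nat => <-.
by apply: eq_bigr => s _; rewrite rmorphM rmorph_sign rmorphM /= mulrA.
Qed.

Lemma phi_e_even j : phi (e (2 * j)%N) = (-1) ^+ j * iota (eS j).
Proof.
apply: (@conv_uniq_l _ (fun j => phi (e (2 * j)%N)) (fun j => (-1) ^+ j * iota (eS j)) (fun k => iota (hS k))).
  by rewrite hS0' rmorph1.
move=> m; rewrite iota_HhS.
have iota0 : iota (hS 0%N) = 1 by rewrite hS0' rmorph1.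
exact: (@par_even _ _ cc _ iota0 gT (fun s => phi (e s)) gTE gTO phi_He m).
Qed.

Lemma phi_e2 r : phi ((-1) ^+ r * e (2 * r)%N) = iota (eS r).
Proof. by rewrite rmorphM rmorph_sign /= phi_e_even signrMK. Qed.

Lemma phi_h2 r : phi (h (2 * r)%N) = iota (hS r).
Proof. by rewrite Hphi gTE. Qed.

Lemma phi_e1 : phi (e 1%N) = c.
Proof. by rewrite e1 phi_o. Qed.

Lemma pic_e0 : pic (e 0%N) = 1.
Proof. by rewrite e0 rmorph1. Qed.

Lemma pic_nf r : pic (h r) = Hq2 r./2 * O ^+ odd r.
Proof. by rewrite /Hq2 /O mul2n; exact: (g_nf relQ two_ne0 QO2 r). Qed.

Lemma pic_surj (q : Qc) : exists a, q = pic a.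
Proof. by exists (repr (q : Qj)); rewrite /pic piQ_surj. Qed.

Definition psi (q : Qc) : T := phi (repr (q : Qj)).

Lemma psi_pic a : psi (pic a) = phi a.
Proof.
have H := phi_J (reprE J1 a); rewrite rmorphB in H.
by move/eqP: H; rewrite subr_eq0 => /eqP.
Qed.

Lemma psi_add : zmod_morphism psi.
Proof.
move=> x y; case: (pic_surj x) => a ->; case: (pic_surj y) => b ->.
by rewrite -rmorphB !psi_pic rmorphB.
Qed.
Lemma psi_mul : monoid_morphism psi.
Proof.
split; first by rewrite -(rmorph1 pic) psi_pic rmorph1.
move=> x y; case: (pic_surj x) => a ->; case: (pic_surj y) => b ->.
by rewrite -rmorphM !psi_pic rmorphM.
Qed.
Lemma psi_scl : scalable psi.
Proof.
move=> k x; case: (pic_surj x) => a ->.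
by rewrite -linearZ !psi_pic linearZ.
Qed.
HB.instance Definition _ := GRing.isZmodMorphism.Build Qc T psi psi_add.
HB.instance Definition _ := GRing.isMonoidMorphism.Build Qc T psi psi_mul.
HB.instance Definition _ := GRing.isScalable.Build K Qc T *:%R psi psi_scl.

Section WithMaps.
Variable fS : {lrmorphism S -> Qc}.
Hypothesis HfS : forall r, fS (eS r) = pic ((-1) ^+ r * e (2 * r)%N).
Variable gTQ : {lrmorphism T -> Qc}.
Hypothesis HgTQ1 : forall x, gTQ (iota x) = fS x.
Hypothesis HgTQ2 : gTQ c = O.

Lemma fS_hS m : fS (hS m) = Hq2 m.
Proof.
apply: (@conv_uniq_r _ (fun j => pic (e (2 * j)%N)) (fun k => fS (hS k)) Hq2); first by rewrite muln0 pic_e0.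
move=> k; rewrite pe_even.
have := congr1 fS (HhS k); rewrite rmorph_sum rmorph_nat => <-.
apply: eq_bigr => j _; rewrite rmorphM rmorph_sign rmorphM /= HfS rmorphM rmorph_sign /=.
by rewrite mulrA signrMK.
Qed.

Lemma comp_pic x : gTQ (phi x) = pic x.
Proof.
have Hrel : OSym_rel (pic \o h) := relQ.
have [f0 [_ U]] := HA.2 _ _ Hrel.
have E1 : (gTQ \o phi : A -> Qc) =1 f0.
  apply: U => r /=; rewrite Hphi /gT rmorphM rmorphXn /= HgTQ1 HgTQ2 fS_hS.
  by rewrite pic_nf.
have E2 : (pic : A -> Qc) =1 f0 by apply: U.
by rewrite -[gTQ (phi x)]/((gTQ \o phi) x) E1 E2.
Qed.

Lemma ker_phi x : phi x = 0 -> ideal_gen PJ x.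
Proof. by move=> H; apply/pic0; rewrite -comp_pic H raddf0. Qed.

Lemma phi_surj t : exists a, phi a = t.
Proof.
exists (repr (gTQ t : Qj)).
have Hf : (psi \o fS : S -> T) =1 iota.
  have i0 : iota (eS 0%N) = 1 by rewrite HS.1 rmorph1.
  have [f1 [_ U]] := HS.2 _ (fun r => iota (eS r)) i0.
  have E1 : (psi \o fS : S -> T) =1 f1.
    by apply: U => r /=; rewrite HfS psi_pic phi_e2.
  have E2 : (iota : S -> T) =1 f1 by apply: U.
  by move=> x; rewrite E1 E2.
have [g0 [_ U]] := HT.2 _ iota c cc.
have E1 : (psi \o gTQ : T -> T) =1 g0.
  apply: U => [x|] /=; first by rewrite HgTQ1 -[psi (fS x)]/((psi \o fS) x) Hf.
  by rewrite HgTQ2 /O psi_pic phi_o.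
have E2 : (idfun : T -> T) =1 g0 by apply: U.
by rewrite -[phi _]/((psi \o gTQ) t) E1 -E2.
Qed.

End WithMaps.

Lemma pic_odd_word w : odd (sumn w) -> exists y, pic (W h w) = y * O.
Proof.
elim: w => [|r w IH] //=; rewrite /W big_cons rmorphM oddD.
case Or: (odd r) => /= Hw.
  by exists (Hq2 r./2 * pic (W h w)); rewrite pic_nf Or expr1 mulrAC.
have [y Hy] := IH Hw; exists (pic (h r) * y).
by rewrite /W in Hy; rewrite Hy mulrA.
Qed.

Lemma pic_odd a : OSym_par h true a -> exists y, pic a = y * O.
Proof.
move=> [s [Hs ->]]; elim: s Hs => [|x s IH] Hs.
  by exists 0; rewrite big_nil rmorph0 mul0r.
have Hs2 : forall t, t \in s -> odd (sumn t.2) = true by move=> t Ht; apply: Hs; rewrite inE Ht orbT.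
have [y Hy] := IH Hs2.
have [z Hz] := pic_odd_word (Hs x (mem_head _ _)).
exists (x.1 *: z + y); rewrite big_cons rmorphD /= linearZ /= Hy.
by rewrite -[\prod_(r <- x.2) h r]/(W h x.2) Hz mulrDl scalerAl.
Qed.

Lemma scomm_J x : scomm h x -> ideal_gen PJ x.
Proof.
move=> [a [b [pa [pb [Ha [Hb ->]]]]]]; apply/pic0.
rewrite rmorphB !rmorphM rmorph_sign /=.
case: pa Ha; case: pb Hb => Hb Ha /=; rewrite ?expr0 ?mul1r ?[pic b * _]mulrC ?subrr //.
have [y Hy] := pic_odd Ha; have [z Hz] := pic_odd Hb.
by rewrite Hy Hz mulrACA OO mulr0 mulr0 subrr.
Qed.

Lemma phiW w : phi (W h w) = iota (\prod_(r <- w) hS r./2) * c ^+ count odd w.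
Proof.
elim: w => [|r w IH]; first by rewrite /W !big_nil !rmorph1 mulr1.
rewrite /W !big_cons rmorphM /= -/(W h w) IH Hphi /gT rmorphM /= exprD.
by rewrite mulrACA.
Qed.

Definition S0 (s : seq (K * seq nat)) : S :=
  \sum_(x <- s | count odd x.2 == 0%N) x.1 *: \prod_(r <- x.2) hS r./2.
Definition S1 (s : seq (K * seq nat)) : S :=
  \sum_(x <- s | count odd x.2 == 1%N) x.1 *: \prod_(r <- x.2) hS r./2.

Lemma phi_lc s : phi (lc h s) = iota (S0 s) + iota (S1 s) * c.
Proof.
elim: s => [|x s IH]; first by rewrite /lc /S0 /S1 !big_nil !rmorph0 mul0r addr0.
rewrite /lc /S0 /S1 !big_cons rmorphD /= linearZ /= -/(lc h s) IH -/(S0 s) -/(S1 s) phiW.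
case: (count odd x.2) => [|[|n]] /=.
- by rewrite expr0 mulr1 rmorphD /= linearZ /= addrA.
- by rewrite expr1 rmorphD /= linearZ /= mulrDl -scalerAl addrCA.
- by rewrite cX // mulr0 scaler0 add0r.
Qed.

Lemma sumn_half w : sumn w = (2 * sumn [seq r./2 | r <- w] + count odd w)%N.
Proof.
elim: w => [|r w IH] //=; rewrite {1}IH -{1}(odd_double_half r) -mul2n; lia.
Qed.

Lemma deg_ok d a : OSym_deg h d a -> SymC_deg eS iota c d (phi a).
Proof.
move=> [s [Hs ->]]; exists (S0 s), (S1 s); split; last split; last split.
- apply: SD_sum_seq => y Hy /eqP Hc; apply: SDZ.
  apply: (SD_eq _ (hS_prod_deg HS.1 HhS y.2)).
  by have := Hs y Hy; rewrite sumn_half Hc; lia.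
- move=> Hd; apply: SD_sum_seq => y Hy /eqP Hc; apply: SDZ.
  apply: (SD_eq _ (hS_prod_deg HS.1 HhS y.2)).
  by have := Hs y Hy; rewrite sumn_half Hc; lia.
- move=> Hd; rewrite /S1 big1_seq // => y /andP[/eqP Hc Hy].
  by have := Hs y Hy; rewrite sumn_half Hc; lia.
- exact: phi_lc.
Qed.

Lemma par_ok p a : OSym_par h p a -> SymC_par iota c p (phi a).
Proof.
move=> [s [Hs ->]]; rewrite -/(lc h s) phi_lc.
case: p Hs => Hs.
- exists (S1 s); suff -> : S0 s = 0 by rewrite rmorph0 add0r.
  rewrite /S0 big1_seq // => y /andP[/eqP Hc Hy].
  by have := Hs y Hy; rewrite sumn_half Hc addn0 oddM.
- exists (S0 s); suff -> : S1 s = 0 by rewrite rmorph0 mul0r addr0.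
  rewrite /S1 big1_seq // => y /andP[/eqP Hc Hy].
  by have := Hs y Hy; rewrite sumn_half Hc oddD oddM.
Qed.

End WithPhi.

Lemma main_in :
  (forall x : A, ideal_gen (scomm h) x <->
     ideal_gen (fun y => y = e 1%N * e 1%N \/ y = e 1%N * e 2%N - e 2%N * e 1%N) x) /\
  (forall r : nat,
     ideal_gen (scomm h) (e (2 * r).+1 - e (2 * r)%N * e 1%N) /\
     ideal_gen (scomm h) (h (2 * r).+1 - h (2 * r)%N * e 1%N)) /\
  (exists phi : {lrmorphism A -> T},
     phi (e 1%N) = c /\
     (forall r : nat, phi ((-1) ^+ r * e (2 * r)%N) = iota (eS r)) /\
     (forall r : nat, phi (h (2 * r)%N) = iota (hS r)) /\
     (forall t : T, exists a : A, phi a = t) /\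
     (forall a : A, phi a = 0 <-> ideal_gen (scomm h) a) /\
     (forall (d : nat) (a : A), OSym_deg h d a -> SymC_deg eS iota c d (phi a)) /\
     (forall (p : bool) (a : A), OSym_par h p a -> SymC_par iota c p (phi a))).
Proof.
have [phi [Hphi _]] := HA.2 _ _ gT_rel.
have IJ : forall x, ideal_gen (scomm h) x <-> ideal_gen PJ x.
  move=> x; split; apply: idg_sub; [exact: scomm_J Hphi | exact: PJ_I].
have b0 : pic Hphi ((-1) ^+ 0 * e (2 * 0)%N) = 1 by rewrite expr0 mul1r muln0 pic_e0.
have [fS [HfS _]] := HS.2 (Qc Hphi) (fun r => pic Hphi ((-1) ^+ r * e (2 * r)%N)) b0.
have [gTQ [[HgT1 HgT2] _]] := HT.2 (Qc Hphi) fS (O Hphi) (OO Hphi).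
split; first exact: IJ.
split.
  move=> r; split; apply/IJ/(pic0 Hphi).
    by rewrite rmorphB rmorphM /= (pe_odd Hphi) e1 subrr.
  by rewrite rmorphB rmorphM /= (HqO Hphi) e1 subrr.
exists phi; split; first exact: phi_e1.
split; first exact: phi_e2.
split; first exact: phi_h2.
split; first exact: (phi_surj HfS HgT1 HgT2).
split.
  move=> a; split => [H|H]; first by apply/IJ; exact: (ker_phi HfS HgT1 HgT2).
  by apply: (phi_J Hphi); apply/IJ.
split; first exact: deg_ok.
exact: par_ok.
Qed.

End Main.


Unset Implicit Arguments.

Theorem mainTheorem6
  (K : closedFieldType) (char_not2 : (2%:R : K) != 0)
  (A : algType K) (h : nat -> A) (HA : is_OSym h)
  (e : nat -> A)
  (He : forall r : nat,
     \sum_(s < r.+1) (-1) ^+ s * (e s * h (r - s)%N) = (r == 0%N)%:R)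
  (S : comAlgType K) (eS : nat -> S) (HS : is_Sym eS)
  (hS : nat -> S)
  (HhS : forall r : nat,
     \sum_(s < r.+1) (-1) ^+ s * (eS s * hS (r - s)%N) = (r == 0%N)%:R)
  (T : comAlgType K) (iota : {lrmorphism S -> T}) (c : T)
  (HT : is_adjoin_c iota c) :
  (* the largest supercommutative quotient is OSym / <o^2, [o, e_2]> *)
  (forall x : A, ideal_gen (scomm h) x <->
     ideal_gen (fun y => y = e 1%N * e 1%N \/ y = e 1%N * e 2%N - e 2%N * e 1%N) x) /\
  (* relations in the quotient R *)
  (forall r : nat,
     ideal_gen (scomm h) (e (2 * r).+1 - e (2 * r)%N * e 1%N) /\
     ideal_gen (scomm h) (h (2 * r).+1 - h (2 * r)%N * e 1%N)) /\
  (* R ~= Sym[c] as graded superalgebras, via phi : OSym ->> Sym[c]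
     with kernel the supercommutator ideal *)
  (exists phi : {lrmorphism A -> T},
     phi (e 1%N) = c /\
     (forall r : nat, phi ((-1) ^+ r * e (2 * r)%N) = iota (eS r)) /\
     (forall r : nat, phi (h (2 * r)%N) = iota (hS r)) /\
     (forall t : T, exists a : A, phi a = t) /\
     (forall a : A, phi a = 0 <-> ideal_gen (scomm h) a) /\
     (forall (d : nat) (a : A), OSym_deg h d a -> SymC_deg eS iota c d (phi a)) /\
     (forall (p : bool) (a : A), OSym_par h p a -> SymC_par iota c p (phi a))).
Proof.
exact: (@main_in K char_not2 A h HA e He S eS HS hS HhS T iota c HT).
Qed.
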